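(* Fix $\beta>1$. There exist $\varepsilon>0$ and $\delta>0$ such that for every power series of the form $g(x)=1+\sum_{k=1}^\infty(a_k-b_k)x^k$ with $(a_1,a_2,\ldots)\in S_\beta^+$ and $(b_1,b_2,\ldots)\in S_\beta^+$, and every $x\in[0,1/\beta+\varepsilon]$, if $|g(x)|<\delta$ then $g'(x)<-\delta$.
   Context: For $\beta>1$ let $f_\beta\colon[0,1]\to[0,1)$, $f_\beta(x)=\beta x\bmod 1$, and for $x\in[0,1]$ let $d(x,\beta)=(d_k(x,\beta))_{k\ge1}$ with $d_k(x,\beta)=\lfloor\beta f_\beta^{k-1}(x)\rfloor$. $S_\beta^+$ denotes the closure, in the product topology on $\{0,1,\ldots,\lfloor\beta\rfloor\}^{\mathbb N}$, of $\{d(x,\beta):x\in[0,1)\}$. *)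

(* Defs.v *)
From Stdlib Require Import Reals Lra Lia ZArith.
From Coquelicot Require Import Coquelicot.
Open Scope R_scope.

Definition fbeta (beta x : R) : R := beta * x - IZR (Int_part (beta * x)).

(* d_{k+1}(x,beta) = floor(beta * f_beta^k(x)); sequences indexed from 0,
   so index k here corresponds to the paper's index k+1. *)
Definition digit (beta x : R) (k : nat) : nat :=
  Z.to_nat (Int_part (beta * Nat.iter k (fbeta beta) x)).

(* S_beta^+ : closure in the product topology of {d(x,beta) : x in [0,1)}.
   A basic neighbourhood of s is a cylinder (first N digits fixed), so s is in
   the closure iff every cylinder around s contains some d(x,beta). *)
Definition S_plus (beta : R) (s : nat -> nat) : Prop :=
  (forall k, (s k <= Z.to_nat (Int_part beta))%nat) /\
  forall N : nat, exists x, 0 <= x < 1 /\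
    forall k, (k < N)%nat -> s k = digit beta x k.

(* g(y) = 1 + sum_{k>=1} (a_k - b_k) y^k, with a_k = a (k-1). *)
Definition gser (a b : nat -> nat) (y : R) : R :=
  1 + Series (fun k => (INR (a k) - INR (b k)) * y ^ (S k)).

(* Main.v *)
Require Import Defs.
From Stdlib Require Import Reals Lra Lia ZArith FunctionalExtensionality.
From Coquelicot Require Import Coquelicot.
Open Scope R_scope.

Lemma geom_bound (u : nat -> R) (K q : R) :
  0 <= q < 1 -> (forall k, 0 <= u k <= K * q ^ k) ->
  ex_series u /\ Series u <= K / (1 - q).
Proof.
  intros Hq Hu.
  assert (Hg : is_series (fun k => q ^ k) (/ (1 - q))).
  { apply is_series_geom. rewrite Rabs_pos_eq; lra. }
  assert (Hex : ex_series (fun k => K * q ^ k)).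
  { exact (ex_series_scal_l K _ (ex_intro _ _ Hg)). }
  assert (Hs : Series (fun k => K * q ^ k) = K / (1 - q)).
  { transitivity (K * Series (fun k => q ^ k)). apply Series_scal_l.
    rewrite (is_series_unique _ _ Hg). reflexivity. }
  assert (Hex2 : ex_series u).
  { apply (ex_series_le u (fun k => K * q ^ k)); [|exact Hex].
    intro n. change (norm (u n)) with (Rabs (u n)). rewrite Rabs_pos_eq; apply Hu. }
  split; [exact Hex2|].
  rewrite <- Hs. apply Series_le; [exact Hu| exact Hex].
Qed.

Lemma partial_le_series (u : nat -> R) :
  (forall k, 0 <= u k) -> ex_series u -> forall N, sum_f_R0 u N <= Series u.
Proof.
  intros Hu Hex N. rewrite <- sum_n_Reals.
  apply is_lim_seq_incr_compare.
  - exact (Series_correct _ Hex).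
  - intro n. rewrite !sum_n_Reals. simpl. specialize (Hu (S n)). lra.
Qed.

Lemma series_le_of_partial (u : nat -> R) (L : R) :
  ex_series u -> (forall N, sum_f_R0 u N <= L) -> Series u <= L.
Proof.
  intros Hex H.
  assert (Hl := is_lim_seq_le (sum_n u) (fun _ => L) (Series u) L).
  simpl in Hl. apply Hl.
  - intro n. rewrite sum_n_Reals. apply H.
  - exact (Series_correct _ Hex).
  - apply is_lim_seq_const.
Qed.

Lemma term_le_partial (u : nat -> R) :
  (forall k, 0 <= u k) -> forall k, u k <= sum_f_R0 u k.
Proof.
  intros Hu [|k]; simpl. lra.
  assert (0 <= sum_f_R0 u k) by (apply cond_pos_sum; exact Hu). lra.
Qed.

Lemma series_nonneg (u : nat -> R) :
  (forall k, 0 <= u k) -> ex_series u -> 0 <= Series u.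
Proof.
  intros Hu Hex. eapply Rle_trans; [|apply (partial_le_series u Hu Hex 0)].
  simpl. apply Hu.
Qed.

Lemma kt_bound (t : R) (k : nat) : 0 <= t <= 1 ->
  INR (S k) * t ^ k - INR k * t ^ (S k) <= 1.
Proof.
  intros Ht. induction k as [|k IH].
  - simpl. lra.
  - rewrite !S_INR in *. simpl pow in *.
    assert (0 <= t ^ k) by (apply pow_le; lra).
    assert (0 <= INR k) by apply pos_INR.
    assert (0 <= (INR k + 1) * t ^ k * ((1 - t) * (1 - t))).
    { apply Rmult_le_pos; [apply Rmult_le_pos; lra|nra]. }
    nra.
Qed.

Lemma kt_bound2 (t : R) (k : nat) : 0 <= t < 1 ->
  INR (S k) * t ^ k <= / (1 - t).
Proof.
  intros Ht. assert (H := kt_bound t k (conj (proj1 Ht) (Rlt_le _ _ (proj2 Ht)))).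
  assert (0 <= t ^ S k) by (apply pow_le; lra).
  rewrite S_INR in *. simpl pow in *.
  apply (Rmult_le_reg_r (1 - t)). lra.
  rewrite Rinv_l by lra. nra.
Qed.

Lemma pow_diff (x y : R) (k : nat) : 0 <= y <= x ->
  x ^ S k - y ^ S k <= (x - y) * INR (S k) * x ^ k.
Proof.
  intros H. induction k as [|k IH].
  - simpl. lra.
  - rewrite !S_INR in *. simpl pow in *.
    assert (0 <= y ^ k) by (apply pow_le; lra).
    assert (y ^ k <= x ^ k) by (apply pow_incr; lra).
    assert (0 <= INR k) by apply pos_INR.
    assert (y * y ^ k <= x * x ^ k) by (apply Rmult_le_compat; lra).
    assert (Ha : x * (x * x ^ k - y * y ^ k) <= x * ((x - y) * (INR k + 1) * x ^ k))
      by (apply Rmult_le_compat_l; lra).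
    assert (Hb : (x - y) * (y * y ^ k) <= (x - y) * (x * x ^ k))
      by (apply Rmult_le_compat_l; lra).
    nra.
Qed.

Lemma pow_decr (x : R) (m n : nat) : 0 <= x <= 1 -> (m <= n)%nat -> x ^ n <= x ^ m.
Proof.
  intros Hx Hmn. induction Hmn. lra.
  simpl. assert (0 <= x ^ m0) by (apply pow_le; lra). nra.
Qed.

Lemma Int_part_nat (r : R) : 0 <= r -> INR (Z.to_nat (Int_part r)) = IZR (Int_part r).
Proof.
  intros Hr. destruct (base_Int_part r) as [H1 H2].
  assert (Hz : (0 <= Int_part r)%Z).
  { assert (-1 < IZR (Int_part r)) by lra.
    apply lt_IZR in H. lia. }
  rewrite INR_IZR_INZ. rewrite Z2Nat.id by exact Hz. reflexivity.
Qed.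

Lemma fbeta_nonneg (beta z : R) : 0 <= fbeta beta z.
Proof. unfold fbeta. destruct (base_Int_part (beta * z)). lra. Qed.

Lemma iter_nonneg (beta x0 : R) (k : nat) : 0 <= x0 -> 0 <= Nat.iter k (fbeta beta) x0.
Proof. intros H. destruct k; simpl. exact H. apply fbeta_nonneg. Qed.

Lemma step (beta z : R) : 1 < beta -> 0 <= z ->
  INR (Z.to_nat (Int_part (beta * z))) * / beta + / beta * fbeta beta z = z.
Proof.
  intros Hb Hz. rewrite Int_part_nat by nra. unfold fbeta.
  field. lra.
Qed.

Lemma digit_sum (beta x0 : R) (N : nat) : 1 < beta -> 0 <= x0 ->
  sum_f_R0 (fun k => INR (digit beta x0 k) * (/ beta) ^ (S k)) N
   + (/ beta) ^ (S N) * Nat.iter (S N) (fbeta beta) x0 = x0.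
Proof.
  intros Hb Hx. induction N as [|N IH].
  - simpl. unfold digit. simpl. rewrite !Rmult_1_r. apply step; assumption.
  - simpl sum_f_R0. rewrite <- IH at 3.
    assert (Hz := iter_nonneg beta x0 (S N) Hx).
    assert (Hs := step beta (Nat.iter (S N) (fbeta beta) x0) Hb Hz).
    unfold digit at 2.
    change (Nat.iter (S (S N)) (fbeta beta) x0) with (fbeta beta (Nat.iter (S N) (fbeta beta) x0)).
    rewrite <- Hs at 3.
    change ((/ beta) ^ S (S N)) with (/ beta * (/beta) ^ (S N)). simpl. ring.
Qed.

Lemma B_partial (beta : R) (b : nat -> nat) : 1 < beta -> S_plus beta b ->
  forall N, sum_f_R0 (fun k => INR (b k) * (/ beta) ^ (S k)) N <= 1.
Proof.
  intros Hb [_ Hs] N. destruct (Hs (S N)) as [x0 [Hx0 Hd]].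
  rewrite (sum_eq _ (fun k => INR (digit beta x0 k) * (/ beta) ^ (S k))).
  2:{ intros i Hi. rewrite Hd by lia. reflexivity. }
  assert (H := digit_sum beta x0 N Hb (proj1 Hx0)).
  assert (0 <= (/ beta) ^ (S N) * Nat.iter (S N) (fbeta beta) x0).
  { apply Rmult_le_pos. apply pow_le. left. apply Rinv_0_lt_compat. lra.
    apply iter_nonneg. lra. }
  lra.
Qed.

Lemma gser_eq (a b : nat -> nat) :
  gser a b = fun y => 1 + PSeries (PS_incr_1 (fun k => INR (a k) - INR (b k))) y.
Proof.
  apply functional_extensionality. intro y. unfold gser. f_equal.
  rewrite PSeries_incr_1. unfold PSeries. rewrite <- Series_scal_l.
  apply Series_ext. intro n. simpl. ring.
Qed.

Lemma gser_derive (a b : nat -> nat) (M x : R) :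
  (forall k, Rabs (INR (a k) - INR (b k)) <= M) -> Rabs x < 1 ->
  is_derive (gser a b) x (Series (fun n => INR (S n) * (INR (a n) - INR (b n)) * x ^ n)).
Proof.
  intros HM Hx. rewrite gser_eq.
  set (c := fun k => INR (a k) - INR (b k)).
  assert (Hr : Rbar_lt (Rabs x) (CV_radius (PS_incr_1 c))).
  { rewrite CV_radius_incr_1.
    set (r2 := (Rabs x + 1) / 2).
    assert (Hle : Rbar_le r2 (CV_radius c)).
    { apply (proj1 (CV_radius_bounded c)). exists M. intro n.
      rewrite Rabs_mult. assert (0 <= Rabs x) by apply Rabs_pos.
      assert (Rabs (r2 ^ n) <= 1).
      { rewrite <- RPow_abs. rewrite <- (pow1 n). apply pow_incr. split; [apply Rabs_pos|].
        unfold r2. rewrite Rabs_pos_eq; lra. }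
      assert (0 <= Rabs (c n)) by apply Rabs_pos.
      specialize (HM n). fold c in HM.
      assert (0 <= Rabs (r2 ^ n)) by apply Rabs_pos.
      apply Rle_trans with (M * 1); [|lra].
      apply Rmult_le_compat; auto. }
    assert (0 <= Rabs x) by apply Rabs_pos.
    destruct (CV_radius c) as [l| |]; simpl in *; try tauto.
    unfold r2 in Hle. lra. }
  assert (H := is_derive_PSeries _ _ Hr).
  assert (H2 := is_derive_plus (fun _ => 1) _ x _ _ (is_derive_const 1 x) H).
  replace (Series (fun n : nat => INR (S n) * (INR (a n) - INR (b n)) * x ^ n))
    with (plus zero (PSeries (PS_derive (PS_incr_1 c)) x)).
  exact H2.
  rewrite plus_zero_l. unfold PSeries. apply Series_ext. intro n. reflexivity.
Qed.

Lemma KQ (x r q t : R) (k : nat) : 0 <= x <= r -> 0 < q -> t * q = r -> 0 <= t < 1 ->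
  INR (S k) * x ^ k <= / (1 - t) * q ^ k.
Proof.
  intros Hx Hq Htq Ht.
  assert (H1 : x ^ k <= r ^ k) by (apply pow_incr; lra).
  assert (H2 := kt_bound2 t k Ht).
  assert (0 <= INR (S k)) by apply pos_INR.
  apply Rle_trans with (INR (S k) * r ^ k). apply Rmult_le_compat_l; auto.
  rewrite <- Htq, Rpow_mult_distr, <- Rmult_assoc.
  apply Rmult_le_compat_r. apply pow_le; lra. exact H2.
Qed.

Lemma xS_le (x r : R) (k : nat) : 0 <= x <= r -> r < 1 -> x ^ S k <= x * r ^ k.
Proof.
  intros Hx Hr. simpl. apply Rmult_le_compat_l. lra. apply pow_incr; lra.
Qed.

Theorem lemma5p1 (beta : R) (hbeta : 1 < beta) :
  exists eps delta : R, 0 < eps /\ 0 < delta /\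
    forall a b : nat -> nat, S_plus beta a -> S_plus beta b ->
    forall x : R, 0 <= x <= 1 / beta + eps ->
      Rabs (gser a b x) < delta ->
      ex_derive (gser a b) x /\ Derive (gser a b) x < - delta.
Proof.
  set (y := / beta).
  assert (Hy : 0 < y < 1).
  { unfold y. split. apply Rinv_0_lt_compat; lra.
    rewrite <- Rinv_1. apply Rinv_lt_contravar; lra. }
  set (D0 := INR (Z.to_nat (Int_part beta))).
  assert (HD0 : 0 <= D0) by apply pos_INR.
  set (Dm := D0 + 1).
  set (r := (1 + y) / 2).
  set (rho := (1 + r) / 2).
  set (q := rho * rho).
  assert (Hr : y < r < 1) by (unfold r; lra).
  assert (Hrho : r < rho < 1) by (unfold rho; lra).
  assert (Hq : r < q < 1).
  { unfold q. split. unfold rho. nra. nra. }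
  set (t := r / q).
  assert (Htq : t * q = r) by (unfold t; field; lra).
  assert (Ht : 0 <= t < 1).
  { split. unfold t. apply Rmult_le_pos; [lra|]. left; apply Rinv_0_lt_compat; lra.
    apply (Rmult_lt_reg_r q). lra. rewrite Htq. lra. }
  set (K := / (1 - t)).
  assert (HK : 0 < K) by (unfold K; apply Rinv_0_lt_compat; lra).
  set (C := Dm * K / (1 - q)).
  assert (HC : 0 < C).
  { unfold C, Dm. apply Rmult_lt_0_compat. apply Rmult_lt_0_compat; lra.
    apply Rinv_0_lt_compat; lra. }
  set (m := (1 - r) / (2 * Dm)).
  assert (Hm : 0 < m < 1).
  { unfold m, Dm. split. apply Rmult_lt_0_compat. lra. apply Rinv_0_lt_compat; lra.
    apply (Rmult_lt_reg_r (2 * (D0 + 1))). lra. unfold Rdiv.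
    rewrite Rmult_assoc, Rinv_l by lra. lra. }
  destruct (pow_lt_1_zero rho (ltac:(rewrite Rabs_pos_eq; lra))
             ((1 - rho) / (4 * (Dm * K)))) as [N HN].
  { apply Rmult_lt_0_compat. lra. apply Rinv_0_lt_compat. unfold Dm. nra. }
  specialize (HN N (Nat.le_refl N)). rewrite Rabs_pos_eq in HN by (apply pow_le; lra).
  assert (HNb : Dm * K * rho ^ N / (1 - rho) < 1 / 4).
  { assert (0 < Dm * K) by (unfold Dm; nra).
    assert (Dm <> 0) by (unfold Dm; lra). assert (K <> 0) by lra.
    apply (Rmult_lt_reg_r ((1 - rho) / (Dm * K))).
    apply Rmult_lt_0_compat. lra. apply Rinv_0_lt_compat. lra.
    replace (Dm * K * rho ^ N / (1 - rho) * ((1 - rho) / (Dm * K))) with (rho ^ N)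
      by (field; repeat split; auto; lra).
    replace (1 / 4 * ((1 - rho) / (Dm * K))) with ((1 - rho) / (4 * (Dm * K)))
      by (field; repeat split; auto). exact HN. }
  set (eta := m ^ S N).
  assert (Heta : 0 < eta) by (unfold eta; apply pow_lt; lra).
  exists (Rmin ((1 - y) / 2) (eta / (2 * C))), (Rmin (1/4) (eta / 2)).
  split. { apply Rmin_pos. lra. apply Rmult_lt_0_compat. lra. apply Rinv_0_lt_compat. lra. }
  split. { apply Rmin_pos; lra. }
  intros a b Ha Hb x Hx Hg.
  set (eps := Rmin ((1 - y) / 2) (eta / (2 * C))) in *.
  set (delta := Rmin (1/4) (eta / 2)) in *.
  assert (He1 : eps <= (1 - y) / 2) by apply Rmin_l.
  assert (He2 : eps <= eta / (2 * C)) by apply Rmin_r.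
  assert (Hd1 : delta <= 1/4) by apply Rmin_l.
  assert (Hd2 : delta <= eta / 2) by apply Rmin_r.
  assert (HCe : C * eps <= eta / 2).
  { apply Rle_trans with (C * (eta / (2 * C))). apply Rmult_le_compat_l; lra.
    right. field. lra. }
  replace (1 / beta) with y in Hx by (unfold y; field; lra).
  assert (Hxr : 0 <= x <= r) by (unfold r; lra).
  assert (Hab : forall s : nat -> nat, S_plus beta s -> forall k, 0 <= INR (s k) <= D0).
  { intros s [Hs _] k. split. apply pos_INR. apply le_INR. apply Hs. }
  assert (HaB := Hab a Ha). assert (HbB := Hab b Hb).
  set (uA := fun k => INR (a k) * x ^ S k).
  set (uB := fun k => INR (b k) * x ^ S k).
  set (dA := fun k => INR (S k) * INR (a k) * x ^ k).
  set (dB := fun k => INR (S k) * INR (b k) * x ^ k).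
  assert (Hpx : forall k, 0 <= x ^ k) by (intro; apply pow_le; lra).
  assert (HuAb : forall k, 0 <= uA k <= (Dm * x) * r ^ k).
  { intro k. unfold uA. specialize (HaB k). assert (H := xS_le x r k Hxr (proj2 Hr)).
    assert (0 <= x ^ S k) by apply Hpx. split. apply Rmult_le_pos; lra.
    replace (Dm * x * r ^ k) with (Dm * (x * r ^ k)) by ring.
    apply Rmult_le_compat; unfold Dm; lra. }
  assert (HuBb : forall k, 0 <= uB k <= (Dm * x) * r ^ k).
  { intro k. unfold uB. specialize (HbB k). assert (H := xS_le x r k Hxr (proj2 Hr)).
    assert (0 <= x ^ S k) by apply Hpx. split. apply Rmult_le_pos; lra.
    replace (Dm * x * r ^ k) with (Dm * (x * r ^ k)) by ring.
    apply Rmult_le_compat; unfold Dm; lra. }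
  assert (HdAb : forall k, 0 <= dA k <= (Dm * K) * q ^ k).
  { intro k. unfold dA. specialize (HaB k). assert (H := KQ x r q t k Hxr ltac:(lra) Htq Ht).
    fold K in H. assert (0 <= INR (S k)) by apply pos_INR.
    assert (0 <= INR (S k) * x ^ k) by (apply Rmult_le_pos; auto).
    split. replace (INR (S k) * INR (a k) * x ^ k) with (INR (a k) * (INR (S k) * x ^ k)) by ring.
    apply Rmult_le_pos; lra.
    replace (INR (S k) * INR (a k) * x ^ k) with (INR (a k) * (INR (S k) * x ^ k)) by ring.
    replace (Dm * K * q ^ k) with (Dm * (K * q ^ k)) by ring.
    apply Rmult_le_compat; unfold Dm; lra. }
  assert (HdBb : forall k, 0 <= dB k <= (Dm * K) * q ^ k).
  { intro k. unfold dB. specialize (HbB k). assert (H := KQ x r q t k Hxr ltac:(lra) Htq Ht).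
    fold K in H. assert (0 <= INR (S k)) by apply pos_INR.
    assert (0 <= INR (S k) * x ^ k) by (apply Rmult_le_pos; auto).
    split. replace (INR (S k) * INR (b k) * x ^ k) with (INR (b k) * (INR (S k) * x ^ k)) by ring.
    apply Rmult_le_pos; lra.
    replace (INR (S k) * INR (b k) * x ^ k) with (INR (b k) * (INR (S k) * x ^ k)) by ring.
    replace (Dm * K * q ^ k) with (Dm * (K * q ^ k)) by ring.
    apply Rmult_le_compat; unfold Dm; lra. }
  destruct (geom_bound uA _ r ltac:(lra) HuAb) as [ExA _].
  destruct (geom_bound uB _ r ltac:(lra) HuBb) as [ExB HBup].
  destruct (geom_bound dA _ q ltac:(lra) HdAb) as [ExdA _].
  destruct (geom_bound dB _ q ltac:(lra) HdBb) as [ExdB _].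
  assert (HuA0 : forall k, 0 <= uA k) by (intro k; apply HuAb).
  assert (HuB0 : forall k, 0 <= uB k) by (intro k; apply HuBb).
  assert (HA0 := series_nonneg uA HuA0 ExA).
  assert (Hgeq : gser a b x = 1 + Series uA - Series uB).
  { unfold gser. replace (1 + Series uA - Series uB) with (1 + (Series uA - Series uB)) by ring.
    rewrite <- Series_minus by assumption. f_equal.
    apply Series_ext. intro n. unfold uA, uB. ring. }
  set (uBy := fun k => INR (b k) * y ^ S k).
  assert (HuBy : forall k, 0 <= uBy k <= (Dm * y) * r ^ k).
  { intro k. unfold uBy. specialize (HbB k). assert (H := xS_le y r k ltac:(lra) (proj2 Hr)).
    assert (0 <= y ^ S k) by (apply pow_le; lra). split. apply Rmult_le_pos; lra.
    replace (Dm * y * r ^ k) with (Dm * (y * r ^ k)) by ring.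
    apply Rmult_le_compat; unfold Dm; lra. }
  destruct (geom_bound uBy _ r ltac:(lra) HuBy) as [ExBy _].
  assert (HBy1 : Series uBy <= 1).
  { apply series_le_of_partial. exact ExBy. exact (B_partial beta b hbeta Hb). }
  assert (HBx : Series uB <= 1 + eta / 2).
  { destruct (Rle_or_lt x y) as [Hxy|Hxy].
    - apply Rle_trans with (Series uBy); [|lra].
      apply Series_le; [|exact ExBy]. intro k. split. apply HuB0.
      unfold uB, uBy. apply Rmult_le_compat_l. apply HbB. apply pow_incr. lra.
    - set (w := fun k => (Dm * (x - y) * K) * q ^ k).
      assert (Hw : forall k, 0 <= w k <= (Dm * (x - y) * K) * q ^ k).
      { intro k. unfold w. split; [|lra]. apply Rmult_le_pos.
        apply Rmult_le_pos. apply Rmult_le_pos; unfold Dm; lra. lra. apply pow_le; lra. }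
      destruct (geom_bound w _ q ltac:(lra) Hw) as [ExW HW].
      assert (ExS : ex_series (fun k => uBy k + w k)) by exact (ex_series_plus _ _ ExBy ExW).
      apply Rle_trans with (Series (fun k => uBy k + w k)).
      + apply Series_le; [|exact ExS]. intro k. split. apply HuB0.
        unfold uB, uBy, w.
        assert (Hd := pow_diff x y k ltac:(lra)).
        assert (Hk := KQ x r q t k Hxr ltac:(lra) Htq Ht). fold K in Hk.
        assert (0 <= y ^ S k <= x ^ S k) by (split; [apply pow_le|apply pow_incr]; lra).
        specialize (HbB k).
        assert (H1 : INR (b k) * (x ^ S k - y ^ S k) <= Dm * ((x - y) * INR (S k) * x ^ k)).
        { apply Rmult_le_compat; unfold Dm; lra. }
        assert (H2 : (x - y) * INR (S k) * x ^ k <= (x - y) * (K * q ^ k)).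
        { rewrite Rmult_assoc. apply Rmult_le_compat_l; lra. }
        assert (H3 : Dm * ((x - y) * INR (S k) * x ^ k) <= Dm * ((x - y) * (K * q ^ k))).
        { apply Rmult_le_compat_l; unfold Dm; lra. }
        nra.
      + rewrite Series_plus by assumption.
        assert (Dm * (x - y) * K / (1 - q) = C * (x - y)) by (unfold C; field; lra).
        assert (C * (x - y) <= C * eps) by (apply Rmult_le_compat_l; lra).
        lra. }
  destruct (Rabs_def2 _ _ Hg) as [Hg1 Hg2]. rewrite Hgeq in Hg1, Hg2.
  assert (HAeta : Series uA < eta) by lra.
  assert (HB34 : Series uB > 3 / 4) by lra.
  assert (Hxm : m <= x).
  { destruct (Rle_or_lt m x) as [H|H]; [exact H|exfalso].
    assert (Dm * m / (1 - r) = 1 / 2) by (unfold m, Dm; field; lra).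
    assert (Dm * x / (1 - r) <= Dm * m / (1 - r)).
    { unfold Rdiv. apply Rmult_le_compat_r. left; apply Rinv_0_lt_compat; lra.
      apply Rmult_le_compat_l; unfold Dm; lra. }
    lra. }
  assert (HdA : Series dA <= Dm * K * rho ^ N / (1 - rho)).
  { apply (geom_bound dA _ rho ltac:(lra)). intro k. split. apply HdAb.
    assert (0 <= rho ^ N) by (apply pow_le; lra).
    assert (0 <= rho ^ k) by (apply pow_le; lra).
    assert (0 < Dm * K) by (unfold Dm; nra).
    assert (0 <= Dm * K * rho ^ N * rho ^ k).
    { apply Rmult_le_pos; [apply Rmult_le_pos|]; lra. }
    destruct (Nat.eq_dec (a k) 0) as [Hz0|Hz0].
    - unfold dA. rewrite Hz0. simpl INR. lra.
    - assert (Hk : (N <= k)%nat).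
      { destruct (le_lt_dec N k) as [Hk|Hk]; [exact Hk|exfalso].
        assert (Hq1 := term_le_partial uA HuA0 k).
        assert (Hq2 := partial_le_series uA HuA0 ExA k).
        assert (Ha1 : 1 <= INR (a k)) by (apply (le_INR 1); lia).
        assert (Hq3 : x ^ S k <= uA k).
        { unfold uA. assert (0 <= x ^ S k) by apply Hpx. nra. }
        assert (Hq4 : eta <= x ^ S N) by (unfold eta; apply pow_incr; lra).
        assert (Hq5 : x ^ S N <= x ^ S k) by (apply pow_decr; [lra|lia]).
        lra. }
      apply Rle_trans with (Dm * K * q ^ k). apply HdAb.
      unfold q. rewrite Rpow_mult_distr.
      assert (rho ^ k <= rho ^ N) by (apply pow_decr; [lra|exact Hk]).
      rewrite <- Rmult_assoc. apply Rmult_le_compat_r. lra.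
      apply Rmult_le_compat_l; lra. }
  assert (HdB : Series uB <= Series dB).
  { apply Series_le; [|exact ExdB]. intro k. split. apply HuB0.
    unfold uB, dB. specialize (HbB k).
    assert (1 <= INR (S k)) by (rewrite S_INR; assert (0 <= INR k) by apply pos_INR; lra).
    assert (x ^ S k <= INR (S k) * x ^ k).
    { change (x ^ S k) with (x * x ^ k). assert (0 <= x ^ k) by apply Hpx.
      apply Rmult_le_compat_r; lra. }
    replace (INR (S k) * INR (b k) * x ^ k) with (INR (b k) * (INR (S k) * x ^ k)) by ring.
    apply Rmult_le_compat_l; lra. }
  assert (Hcoef : forall k, Rabs (INR (a k) - INR (b k)) <= Dm).
  { intro k. specialize (HaB k). specialize (HbB k). apply Rabs_le. unfold Dm. lra. }
  assert (Hx1 : Rabs x < 1) by (rewrite Rabs_pos_eq; lra).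
  assert (HD := gser_derive a b Dm x Hcoef Hx1).
  split. exists (Series (fun n => INR (S n) * (INR (a n) - INR (b n)) * x ^ n)). exact HD.
  rewrite (is_derive_unique _ _ _ HD).
  replace (Series (fun n => INR (S n) * (INR (a n) - INR (b n)) * x ^ n))
    with (Series dA - Series dB).
  lra.
  rewrite <- Series_minus by assumption. apply Series_ext. intro n. unfold dA, dB. ring.
Qed.
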